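(* Let $n\ge2$, let $\lambda_1\ge\dots\ge\lambda_n$ be real numbers, and let $\mu_1\ge\dots\ge\mu_{n-1}$ be the critical points (roots of the derivative, with multiplicity) of $q(x)=\prod_{j=1}^n(x-\lambda_j)$. Then for all integers $1\le\ell\le r\le n-1$, $$\sum_{j=\ell}^r\lambda_{j+1}+\frac{1}{r+1}\sum_{j=\ell}^r(\lambda_\ell-\lambda_{j+1})\le\sum_{j=\ell}^r\mu_j\le\sum_{j=\ell}^r\lambda_j-\frac{1}{n-\ell+1}\sum_{j=\ell}^r(\lambda_j-\lambda_{r+1}).$$ Equivalently, $$\frac{r}{r+1}\sum_{j=\ell}^r\lambda_{j+1}+\frac{r-\ell+1}{r+1}\lambda_\ell\le\sum_{j=\ell}^r\mu_j\le\frac{n-\ell}{n-\ell+1}\sum_{j=\ell}^r\lambda_j+\frac{r-\ell+1}{n-\ell+1}\lambda_{r+1}.$$ *)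

(* Defs.v *)
From HB Require Import structures.
From mathcomp Require Import all_boot all_order all_algebra.
From mathcomp Require Export reals.
Set Implicit Arguments. Unset Strict Implicit. Unset Printing Implicit Defensive.
Import Order.TTheory GRing.Theory Num.Theory.
Local Open Scope ring_scope.

Definition rootpoly (R : nzRingType) (lam : nat -> R) (n : nat) : {poly R} :=
  \prod_(1 <= j < n.+1) ('X - (lam j)%:P).

(* Main.v *)
Require Import Defs.
From HB Require Import structures.
From mathcomp Require Import all_boot all_order all_algebra.
From mathcomp Require Import reals.
From mathcomp Require Import polyorder polyrcf.
From mathcomp Require Import zify ring lra.
Import Order.TTheory GRing.Theory Num.Theory.
Local Open Scope ring_scope.
Set Implicit Arguments. Unset Strict Implicit. Unset Printing Implicit Defensive.

Section Basics.
Variable R : realType.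
Implicit Types (f g : nat -> R).

Definition prodX (a b : nat) f : {poly R} := \prod_(a <= i < b) ('X - (f i)%:P).

Lemma prodX_monic a b f : prodX a b f \is monic.
Proof. by apply: monic_prod => i _; apply: monicXsubC. Qed.

Lemma prodX_neq0 a b f : prodX a b f != 0.
Proof. exact: monic_neq0 (prodX_monic a b f). Qed.

Lemma prodX_size a b f : size (prodX a b f) = (b - a).+1.
Proof.
rewrite /prodX -(big_map f predT (fun x => 'X - x%:P)) size_prod_XsubC.
by rewrite size_map size_iota.
Qed.

Lemma prodX_horner a b f x : (prodX a b f).[x] = \prod_(a <= i < b) (x - f i).
Proof. by rewrite /prodX horner_prod; apply: eq_bigr => i _; rewrite hornerXsubC. Qed.

Lemma mu_prodX a b f c : \mu_c (prodX a b f) = (\sum_(a <= i < b) (f i == c))%N.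
Proof.
rewrite /prodX /index_iota; move: (b - a)%N => k; elim: k a => [|k IH] a.
  by rewrite !big_nil mu_polyC.
rewrite /= !big_cons mu_mul; last first.
  by rewrite mulf_neq0 ?polyXsubC_eq0 // monic_neq0 // monic_prod // => i _; apply: monicXsubC.
rewrite IH; congr (_ + _)%N.
have [->|ne] := eqVneq (f a) c; first by rewrite mu_XsubC.
by rewrite muNroot // root_XsubC eq_sym.
Qed.

Lemma root_prodX a b f x : root (prodX a b f) x -> exists2 i, (a <= i < b)%N & f i = x.
Proof.
rewrite rootE prodX_horner => h.
have : ~~ all (fun i => true ==> (x - f i != 0)) (index_iota a b).
  by rewrite -prodf_seq_neq0 negbK.
case/allPn => i; rewrite mem_index_iota /= negbK subr_eq0 => hi /eqP ->.
by exists i.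
Qed.

Lemma prodX_logder a b f x : (prodX a b f).[x] != 0 ->
  (prodX a b f)^`().[x] = (prodX a b f).[x] * \sum_(a <= i < b) (x - f i)^-1.
Proof.
rewrite /prodX /index_iota; move: (b - a)%N => k; elim: k a => [|k IH] a.
  by rewrite !big_nil derivC !hornerE.
rewrite [iota _ _]/= !big_cons derivM hornerD !hornerM derivXsubC hornerC mul1r hornerXsubC.
move=> h; have hx : x - f a != 0 by move: h; rewrite mulf_eq0 negb_or => /andP[].
have hp : (\prod_(j <- iota a.+1 k) ('X - (f j)%:P)).[x] != 0.
  by move: h; rewrite mulf_eq0 negb_or => /andP[].
rewrite IH //; set P := (\prod_(j <- _) _).[x]; set S := \sum_(j <- _) _.
by rewrite mulrDr [_ * P * _]mulrAC mulfV // mul1r; ring.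
Qed.

Lemma sorted_range f (a b : nat) : (forall i, (a <= i)%N -> (i < b)%N -> f i.+1 <= f i) ->
  forall i j, (a <= i)%N -> (i <= j)%N -> (j <= b)%N -> f j <= f i.
Proof.
move=> h i j hi hij; elim: j hij => [|j IH] hij hjb.
  by have -> : i = 0%N by lia.
have [->|hlt] := eqVneq i j.+1; first by [].
have hij' : (i <= j)%N by lia.
apply: le_trans (IH hij' _); [apply: h|]; lia.
Qed.

End Basics.

Section Coefs.
Variable R : realType.
Implicit Types (f : nat -> R).

Lemma coef_iota_top a k f : (\prod_(i <- iota a k) ('X - (f i)%:P))`_k = 1 :> R.
Proof.
have mo : \prod_(i <- iota a k) ('X - (f i)%:P) \is monic.
  by apply: monic_prod => i _; apply: monicXsubC.
have sz : size (\prod_(i <- iota a k) ('X - (f i)%:P)) = k.+1.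
  by rewrite -(big_map f predT (fun x => 'X - x%:P)) size_prod_XsubC size_map size_iota.
by move: mo; rewrite monicE /lead_coef sz => /eqP.
Qed.

Lemma coefXsubCM (c : R) (p : {poly R}) i :
  (('X - c%:P) * p)`_i = (if i == 0%N then 0 else p`_i.-1) - c * p`_i.
Proof. by rewrite mulrBl coefB coefXM coefCM. Qed.

Lemma coefXsubCMS (c : R) (p : {poly R}) i :
  (('X - c%:P) * p)`_i.+1 = p`_i - c * p`_i.+1.
Proof. by rewrite coefXsubCM. Qed.

Lemma coef_iota_sub a k f :
  (\prod_(i <- iota a k.+1) ('X - (f i)%:P))`_k = - \sum_(i <- iota a k.+1) f i.
Proof.
elim: k a => [|k IH] a.
  rewrite /= big_cons big_nil big_cons big_nil mulr1 coefB coefX coefC /=.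
  by rewrite sub0r addr0.
rewrite (_ : iota a k.+2 = a :: iota a.+1 k.+1) // big_cons coefXsubCMS IH coef_iota_top [X in _ = - X]big_cons.
by rewrite mulr1 opprD addrC.
Qed.

Lemma coef_prodX_top a b f : (prodX a b f)`_(b - a) = 1.
Proof. exact: coef_iota_top. Qed.

Lemma coef_prodX_sub a b f : (a < b)%N ->
  (prodX a b f)`_(b - a).-1 = - \sum_(a <= i < b) f i.
Proof.
move=> hab; rewrite /prodX /index_iota.
have -> : (b - a = (b - a).-1.+1)%N by lia.
by rewrite coef_iota_sub.
Qed.

End Coefs.

Lemma root_prodX_at (R : realType) a b (f : nat -> R) t : (a <= t < b)%N -> root (prodX a b f) (f t).
Proof.
move=> /andP[h1 h2]; rewrite rootE prodX_horner; apply/eqP.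
rewrite (@big_cat_nat _ _ _ t a b) //=; last exact: ltnW.
by rewrite [\prod_(t <= j < b) _]big_ltn ?subrr ?mul0r ?mulr0.
Qed.
Section Cnt.
Definition cnt (a b : nat) (P : pred nat) : nat := (\sum_(a <= i < b) P i)%N.

Lemma cnt_mono a b (P Q : pred nat) : (forall i, (a <= i < b)%N -> P i -> Q i) ->
  (cnt a b P <= cnt a b Q)%N.
Proof.
move=> h; rewrite /cnt big_nat [X in (_ <= X)%N]big_nat; apply: leq_sum => i hi.
by case: (P i) (h i hi) => // ->.
Qed.

Lemma cnt_split a b c P : (a <= b)%N -> (b <= c)%N -> cnt a c P = (cnt a b P + cnt b c P)%N.
Proof. by move=> hab hbc; rewrite /cnt (big_cat_nat hab hbc). Qed.

Lemma cnt_ge1 a b (P : pred nat) t : (a <= t < b)%N -> P t -> (1 <= cnt a b P)%N.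
Proof.
move=> /andP[h1 h2] hP; rewrite /cnt (@big_cat_nat _ _ _ t a b) //; last exact: ltnW.
apply: leq_trans (leq_addl _ _); by rewrite big_ltn // hP.
Qed.

Lemma cnt_le_len a b P : (cnt a b P <= b - a)%N.
Proof.
rewrite /cnt /index_iota; move: (b - a)%N => k; elim: k a => [|k IH] a.
  by rewrite big_nil.
by rewrite /= big_cons; move: (IH a.+1); case: (P a) => /=; lia.
Qed.

Lemma cnt0 a b (P : pred nat) : (forall i, (a <= i < b)%N -> ~~ P i) -> cnt a b P = 0%N.
Proof.
move=> h; rewrite /cnt big_nat big1 // => i hi; by rewrite (negPf (h i hi)).
Qed.

Lemma cnt_add3 a b (P Q S T : pred nat) :
  (forall i, (a <= i < b)%N -> (P i + Q i + S i <= T i)%N) ->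
  (cnt a b P + cnt a b Q + cnt a b S <= cnt a b T)%N.
Proof.
move=> h; rewrite /cnt -!big_split /= big_nat [X in (_ <= X)%N]big_nat.
by apply: leq_sum => i hi; apply: h.
Qed.

Lemma cnt_eq a b (P Q : pred nat) : (forall i, (a <= i < b)%N -> P i = Q i) ->
  cnt a b P = cnt a b Q.
Proof. by move=> h; rewrite /cnt big_nat [RHS]big_nat; apply: eq_bigr => i hi; rewrite h. Qed.

Lemma cnt_recl a b P : (a < b)%N -> cnt a b P = (P a + cnt a.+1 b P)%N.
Proof. by move=> h; rewrite /cnt big_ltn. Qed.

End Cnt.

Lemma cnt_le_add a b (P Q T : pred nat) :
  (forall i, (a <= i < b)%N -> (T i <= P i + Q i)%N) ->
  (cnt a b T <= cnt a b P + cnt a b Q)%N.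
Proof.
move=> h; rewrite /cnt -big_split /= big_nat [X in (_ <= X)%N]big_nat.
by apply: leq_sum => i hi; apply: h.
Qed.

Lemma cnt_all a b (P : pred nat) : (forall i, (a <= i < b)%N -> P i) -> cnt a b P = (b - a)%N.
Proof.
move=> h; rewrite /cnt big_nat (eq_bigr (fun _ => 1%N)); last by move=> i hi; rewrite h.
rewrite -big_nat big_const_nat; elim: (b - a)%N => //= k ->; by rewrite add1n.
Qed.

Section Config.
Variables (R : realType) (n : nat) (lam mu : nat -> R).
Hypothesis hn : (2 <= n)%N.
Hypothesis hlam : forall i, (1 <= i)%N -> (i < n)%N -> lam i.+1 <= lam i.
Hypothesis hmu : forall i, (1 <= i)%N -> (i < n.-1)%N -> mu i.+1 <= mu i.
Hypothesis hder : (prodX 1 n.+1 lam)^`() = n%:R *: prodX 1 n mu.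

Local Notation q := (prodX 1 n.+1 lam).

Lemma lam_sorted i j : (1 <= i)%N -> (i <= j)%N -> (j <= n)%N -> lam j <= lam i.
Proof. exact: (@sorted_range R lam 1 n hlam i j). Qed.

Lemma mu_sorted i j : (1 <= i)%N -> (i <= j)%N -> (j <= n.-1)%N -> mu j <= mu i.
Proof. exact: (@sorted_range R mu 1 n.-1 hmu i j). Qed.

Lemma lam_root i : (1 <= i <= n)%N -> root q (lam i).
Proof.
move=> hi; rewrite rootE prodX_horner; apply/eqP.
case/andP: hi => h1 h2.
rewrite (@big_cat_nat _ _ _ i 1 n.+1) //=; last by apply: leqW.
by rewrite [\prod_(i <= j < n.+1) _]big_ltn ?subrr ?mul0r ?mulr0.
Qed.

Lemma Mu c : root q c ->
  cnt 1 n (fun t => mu t == c) = (cnt 1 n.+1 (fun i => lam i == c)).-1.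
Proof.
move=> hc; have := mu_deriv hc; rewrite hder mu_mulC; last first.
  by rewrite pnatr_eq0; lia.
by rewrite !mu_prodX /cnt subn1.
Qed.

Lemma deriv_root z : q^`().[z] = 0 -> exists2 t, (1 <= t < n)%N & mu t = z.
Proof.
rewrite hder hornerZ => /eqP; rewrite mulf_eq0 pnatr_eq0 => /orP[/eqP|/eqP h]; first lia.
by apply: root_prodX; rewrite rootE h.
Qed.

Lemma count_ge s : (1 <= s <= n)%N ->
  (cnt 1 n.+1 (fun i => (lam s <= lam i)%R) <= (cnt 1 n (fun t => (lam s <= mu t)%R)).+1)%N.
Proof.
elim: s => [|s IH] hs; first lia.
have [s0|spos] := eqVneq s 0%N.
  subst s.
  have e1 : (cnt 1 n.+1 (fun i => (lam 1 <= lam i)%R) <= cnt 1 n.+1 (fun i => lam i == lam 1))%N.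
    apply: cnt_mono => i hi h; rewrite eq_le h andbT; apply: lam_sorted; lia.
  have e2 : (cnt 1 n (fun t => mu t == lam 1) <= cnt 1 n (fun t => (lam 1 <= mu t)%R))%N.
    by apply: cnt_mono => i hi /eqP ->.
  have r1 : (1 <= 1 <= n)%N by lia.
  have e3 := Mu (lam_root r1).
  have e4 : (1 <= cnt 1 n.+1 (fun i => lam i == lam 1))%N.
    by apply: (@cnt_ge1 _ _ _ 1%N) => //; lia.
  rewrite /= in e3 *; lia.
have rs : (1 <= s <= n)%N by lia.
have rs1 : (1 <= s.+1 <= n)%N by lia.
have IH' := IH rs.
have hle : lam s.+1 <= lam s by apply: hlam; lia.
have [heq|hlt] := eqVneq (lam s.+1) (lam s).
  by rewrite heq; apply: IH'; lia.
have hlt' : lam s.+1 < lam s by rewrite lt_neqAle hlt hle.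
set c := lam s.+1; set d := lam s.
have [z hz hz0] := poly_rolle hlt' (etrans (rootP (lam_root rs1))
   (esym (rootP (lam_root rs)))).
have [t ht hzt] := deriv_root hz0.
have czd : c < z < d by rewrite in_itv /= in hz.
have e1 : (cnt 1 n.+1 (fun i => (c <= lam i)%R) <=
   cnt 1 n.+1 (fun i => (d <= lam i)%R) + cnt 1 n.+1 (fun i => lam i == c))%N.
  apply: cnt_le_add => i hi.
  have [his|his] := leqP i s.
    have -> : (d <= lam i)%R by apply: lam_sorted; lia.
    by case: (c <= lam i)%R.
  have h : lam i <= c by apply: lam_sorted; lia.
  case: (boolP (c <= lam i)%R) => //= hci.
  by rewrite eq_le h hci addn1.
have e2 : (cnt 1 n (fun t => (d <= mu t)%R) + cnt 1 n (fun t => mu t == z)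
   + cnt 1 n (fun t => mu t == c) <= cnt 1 n (fun t => (c <= mu t)%R))%N.
  apply: cnt_add3 => i hi.
  case/andP: czd => cz zd.
  have [->|nz] := eqVneq (mu i) z.
    rewrite (ltW cz) (gt_eqF cz) (lt_geF zd) /=; done.
  have [->|nc] := eqVneq (mu i) c.
    rewrite lexx; have : ~~ (d <= c) by rewrite -ltNge (lt_trans cz zd).
    by move/negPf ->.
  case: (boolP (d <= mu i)) => //= hd.
  by rewrite (le_trans (ltW (lt_trans cz zd)) hd).
have e3 := Mu (lam_root rs1).
have e4 : (1 <= cnt 1 n.+1 (fun i => lam i == c))%N.
  apply: (@cnt_ge1 _ _ _ s.+1); first lia.
  by rewrite /c.
have e5 : (1 <= cnt 1 n (fun t => mu t == z))%N.
  by apply: (@cnt_ge1 _ _ _ t) => //; apply/eqP.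
rewrite -/c -/d in IH' e3 e1 e2. move: IH' e1 e2 e3 e4 e5. clear. lia.
Qed.

Lemma interlace_lo j : (1 <= j)%N -> (j < n)%N -> lam j.+1 <= mu j.
Proof.
move=> h1 h2; rewrite leNgt; apply/negP => hlt.
have rj : (1 <= j.+1 <= n)%N by lia.
have H := count_ge rj.
have A : cnt 1 n.+1 (fun i => (lam j.+1 <= lam i)%R) = (cnt 1 j.+2 (fun i => (lam j.+1 <= lam i)%R)
    + cnt j.+2 n.+1 (fun i => (lam j.+1 <= lam i)%R))%N by apply: cnt_split; lia.
have A1 : cnt 1 j.+2 (fun i => (lam j.+1 <= lam i)%R) = j.+1.
  rewrite cnt_all ?subSS ?subn0 // => i hi; apply: lam_sorted; lia.
have B : cnt 1 n (fun t => (lam j.+1 <= mu t)%R) = (cnt 1 j (fun t => (lam j.+1 <= mu t)%R)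
    + cnt j n (fun t => (lam j.+1 <= mu t)%R))%N by apply: cnt_split; lia.
have B1 := cnt_le_len 1 j (fun t => (lam j.+1 <= mu t)%R).
have B2 : cnt j n (fun t => (lam j.+1 <= mu t)%R) = 0%N.
  apply: cnt0 => t ht; rewrite -ltNge; apply: le_lt_trans hlt.
  apply: mu_sorted; lia.
rewrite A A1 B B2 in H; move: H B1 h1; clear; lia.
Qed.

End Config.

Section Refl.
Variable R : realType.
Implicit Types (f : nat -> R).

Definition prodXp (a b : nat) f : {poly R} := \prod_(a <= i < b) ('X + (f i)%:P).

Lemma comp_prodX a b f :
  (prodX a b f) \Po (-'X) = (-1) ^+ (b - a) *: prodXp a b f.
Proof.
rewrite /prodX /prodXp /index_iota; move: (b - a)%N => k; elim: k a => [|k IH] a.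
  by rewrite !big_nil comp_polyC expr0 scale1r.
rewrite [iota _ _]/= !big_cons comp_polyM IH comp_polyB comp_polyX comp_polyC.
have -> : (- 'X - (f a)%:P) = (-1) *: ('X + (f a)%:P) by rewrite scaleN1r opprD.
by rewrite -scalerAl -scalerAr scalerA exprS.
Qed.

Lemma prodXp_rev m f : prodXp 1 m.+1 (fun i => f (m.+1 - i)%N) = prodXp 1 m.+1 f.
Proof.
rewrite /prodXp big_nat_rev; apply: eq_big_nat => i hi.
by have -> : (m.+1 - (1 + m.+1 - i.+1))%N = i by lia.
Qed.

Lemma refl_poly m f :
  prodX 1 m.+1 (fun i => - f (m.+1 - i)%N) = (-1) ^+ m *: ((prodX 1 m.+1 f) \Po (-'X)).
Proof.
rewrite comp_prodX scalerA -exprD subn1 /= -prodXp_rev.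
rewrite (_ : (-1) ^+ (m + m) = 1 :> R); last by rewrite addnn -mul2n exprM sqrrN !expr1n.
rewrite scale1r /prodX /prodXp; apply: eq_bigr => i _.
by rewrite polyCN opprK.
Qed.

End Refl.

Section ReflConfig.
Variables (R : realType) (n : nat) (lam mu : nat -> R).
Hypothesis hn : (2 <= n)%N.
Hypothesis hlam : forall i, (1 <= i)%N -> (i < n)%N -> lam i.+1 <= lam i.
Hypothesis hmu : forall i, (1 <= i)%N -> (i < n.-1)%N -> mu i.+1 <= mu i.
Hypothesis hder : (prodX 1 n.+1 lam)^`() = n%:R *: prodX 1 n mu.

Definition lamR i := - lam (n.+1 - i)%N.
Definition muR j := - mu (n - j)%N.

Lemma hlamR : forall i, (1 <= i)%N -> (i < n)%N -> lamR i.+1 <= lamR i.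
Proof.
move=> i h1 h2; rewrite /lamR lerN2.
have -> : (n.+1 - i = (n - i).+1)%N by lia.
have -> : (n.+1 - i.+1 = (n - i))%N by lia.
apply: hlam; lia.
Qed.

Lemma hmuR : forall i, (1 <= i)%N -> (i < n.-1)%N -> muR i.+1 <= muR i.
Proof.
move=> i h1 h2; rewrite /muR lerN2.
have -> : (n - i = (n - i.+1).+1)%N by lia.
apply: hmu; lia.
Qed.

Lemma hderR : (prodX 1 n.+1 lamR)^`() = n%:R *: prodX 1 n muR.
Proof.
rewrite /lamR refl_poly derivZ deriv_comp hder derivN derivX.
rewrite (comp_polyZ (n%:R : R) (prodX 1 n mu) (-'X)).
have [m hm] : exists m, n = m.+1 by exists n.-1; lia.
rewrite /muR [in RHS]hm refl_poly -hm.
rewrite mulrN1 scalerN !scalerA -scaleNr; congr (_ *: _).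
by rewrite hm exprS; ring.
Qed.

End ReflConfig.

Section Interlace.
Variables (R : realType) (n : nat) (lam mu : nat -> R).
Hypothesis hn : (2 <= n)%N.
Hypothesis hlam : forall i, (1 <= i)%N -> (i < n)%N -> lam i.+1 <= lam i.
Hypothesis hmu : forall i, (1 <= i)%N -> (i < n.-1)%N -> mu i.+1 <= mu i.
Hypothesis hder : (prodX 1 n.+1 lam)^`() = n%:R *: prodX 1 n mu.

Lemma interlace_hi j : (1 <= j)%N -> (j < n)%N -> mu j <= lam j.
Proof.
move=> h1 h2.
have r1 : (1 <= n - j)%N by lia.
have r2 : (n - j < n)%N by lia.
have := interlace_lo hn (hlamR hn hlam) (hmuR hn hmu) (hderR hn hder) r1 r2.
rewrite /lamR /muR lerN2.
have -> : (n.+1 - (n - j).+1 = j)%N by lia.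
have -> : (n - (n - j) = j)%N by lia.
by apply; lia.
Qed.

End Interlace.

Section Lagrange.
Variable R : realType.

Lemma size_prodXs (s : seq nat) (a : nat -> R) (P : pred nat) :
  size (\prod_(u <- s | P u) ('X - (a u)%:P)) = (count P s).+1.
Proof.
rewrite -big_filter -(big_map a predT (fun x => 'X - x%:P)) size_prod_XsubC.
by rewrite size_map size_filter.
Qed.

Lemma monic_prodXs (s : seq nat) (a : nat -> R) (P : pred nat) :
  \prod_(u <- s | P u) ('X - (a u)%:P) \is monic.
Proof. by apply: monic_prod => i _; apply: monicXsubC. Qed.

Lemma horner_prodXs (s : seq nat) (a : nat -> R) (P : pred nat) x :
  (\prod_(u <- s | P u) ('X - (a u)%:P)).[x] = \prod_(u <- s | P u) (x - a u).
Proof. by rewrite horner_prod; apply: eq_bigr => i _; rewrite hornerXsubC. Qed.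

Lemma lagrange_coef (s : seq nat) (a : nat -> R) (P : {poly R}) :
  uniq s -> {in s &, injective a} -> (size P <= size s)%N ->
  P`_(size s).-1 = \sum_(t <- s) P.[a t] / \prod_(u <- s | u != t) (a t - a u).
Proof.
move=> us ia hP.
pose L := \sum_(t <- s) (P.[a t] / \prod_(u <- s | u != t) (a t - a u)) *:
            \prod_(u <- s | u != t) ('X - (a u)%:P).
have cnt_ne t : t \in s -> count (fun u => u != t) s = (size s).-1.
  move=> ts; have h1 := count_predC (fun u => u != t) s.
  have h2 : count (predC (fun u => u != t)) s = 1%N.
    rewrite (eq_count (a2 := pred1 t)); last by move=> x /=; rewrite negbK.
    by rewrite (count_uniq_mem _ us) ts.
  by rewrite h2 addn1 in h1; rewrite -h1.
have sL : (size L <= size s)%N.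
  rewrite /L; apply: (leq_trans (size_sum _ _ _)).
  apply/bigmax_leqP_seq => t ts _; apply: (leq_trans (size_scale_leq _ _)).
  by rewrite size_prodXs cnt_ne // prednK //; case: s ts {us ia hP L cnt_ne}.
have ne0 t : t \in s -> \prod_(u <- s | u != t) (a t - a u) != 0.
  move=> ts; rewrite prodf_seq_neq0; apply/allP => u us' /=; apply/implyP => ut.
  by rewrite subr_eq0; apply/negP => /eqP /(ia _ _ ts us') e; rewrite e eqxx in ut.
have Lv v : v \in s -> L.[a v] = P.[a v].
  move=> vs; rewrite /L horner_sum (bigD1_seq v) //= hornerZ horner_prodXs.
  rewrite mulfVK ?ne0 // big1_seq ?addr0 // => t /andP[tv ts].
  rewrite hornerZ horner_prodXs; apply/eqP; rewrite mulf_eq0; apply/orP; right.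
  rewrite -big_filter (bigD1_seq v) ?filter_uniq ?mem_filter ?vs ?andbT 1?eq_sym //=.
  by rewrite subrr mul0r.
have PL : P = L.
  apply/eqP; rewrite -subr_eq0; apply/eqP.
  apply: (@poly_ltsp_roots _ _ (map a s)).
  - rewrite size_map; apply: (leq_trans (size_add _ _)); rewrite size_opp.
    by rewrite geq_max hP sL.
  - by rewrite map_inj_in_uniq.
  - apply/allP => x /mapP [v vs ->]; by rewrite rootE !hornerE Lv // subrr.
rewrite {1}PL /L coef_sum; apply: eq_big_seq => t ts.
rewrite coefZ; set Q := \prod_(u <- s | u != t) ('X - (a u)%:P).
have -> : Q`_(size s).-1 = 1.
  have := monic_prodXs s a (fun u => u != t); rewrite -/Q monicE /lead_coef.
  by rewrite /Q size_prodXs cnt_ne // => /eqP.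
by rewrite mulr1.
Qed.

End Lagrange.

Section CoefMonic.
Variable R : realType.

Lemma coef_mul_monic (D1 Z : {poly R}) k : Z \is monic -> (size D1 <= k)%N -> (0 < k)%N ->
  (D1 * Z)`_(k.-1 + (size Z).-1) = D1`_k.-1.
Proof.
move=> mZ hk k0.
have sZ : (0 < size Z)%N by rewrite size_poly_gt0 monic_neq0.
have [h0|hne] := eqVneq D1`_k.-1 0.
  have s1 : (size D1 <= k.-1)%N.
    apply/leq_sizeP => j hj; have [->|ne] := eqVneq j k.-1; first exact: h0.
    by move/leq_sizeP: hk; apply; lia.
  rewrite h0; apply/leq_sizeP; last exact: leqnn.
  by apply: (leq_trans (size_mul_leq _ _)); lia.
have s1 : size D1 = k.
  apply/eqP; rewrite eqn_leq hk /=; apply/negPn/negP; rewrite -ltnNge => hs.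
  have hs' : (size D1 <= k.-1)%N by rewrite -ltnS prednK.
  by move/leq_sizeP: hs' => /(_ k.-1 (leqnn _)) h; rewrite h eqxx in hne.
have D10 : D1 != 0 by rewrite -size_poly_eq0 s1; lia.
have := lead_coef_Mmonic D1 mZ; rewrite /lead_coef size_Mmonic // s1.
by have -> : ((k + size Z).-1.-1 = k.-1 + (size Z).-1)%N by lia.
Qed.

End CoefMonic.

Section DvdMu.
Variable R : realType.

Lemma dvd_mu_range a b (P : pred nat) (f : nat -> R) (Pol : {poly R}) : Pol != 0 ->
  (forall c, (cnt a b (fun u => P u && (f u == c)) <= \mu_c Pol)%N) ->
  \prod_(a <= u < b | P u) ('X - (f u)%:P) %| Pol.
Proof.
rewrite /cnt /index_iota; move: (b - a)%N => k; elim: k a Pol => [|k IH] a Pol P0 h.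
  by rewrite big_nil dvd1p.
rewrite [iota _ _]/= big_cons.
have h' c : ((P a && (f a == c)) + \sum_(u <- iota a.+1 k) (P u && (f u == c)) <= \mu_c Pol)%N.
  by have := h c; rewrite [iota _ _]/= big_cons.
case: (boolP (P a)) => Pa; last first.
  apply: IH => // c; have := h' c; rewrite (negPf Pa) /=; lia.
have hr : root Pol (f a).
  rewrite -mu_gt0 //; have := h' (f a); rewrite Pa eqxx /=; lia.
have dv : ('X - (f a)%:P) %| Pol by rewrite -root_factor_theorem.
set Pol1 := Pol %/ ('X - (f a)%:P).
have ePol : Pol = Pol1 * ('X - (f a)%:P) by rewrite divpK.
have P10 : Pol1 != 0 by apply: contraNneq P0 => e; rewrite ePol e mul0r.
rewrite ePol mulrC dvdp_mul2r ?polyXsubC_eq0 //.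
apply: IH => // c; have := h' c; rewrite ePol mu_mul ?mulf_neq0 ?polyXsubC_eq0 //.
rewrite Pa /=; have [<-|ne] := eqVneq (f a) c.
  by rewrite mu_XsubC /= addn1 add1n ltnS.
by rewrite [\mu_c ('X - _)]muNroot ?root_XsubC 1?eq_sym //= addn0.
Qed.

End DvdMu.

Section PairsGen.
Variable R : realType.
Definition prl (lam : nat -> R) (c : R) : pred nat := fun u => (lam u == c) && (lam u.+1 == c).

Lemma pairs_gen (lam : nat -> R) c k a :
  (1 <= cnt a (a + k).+1 (fun i => lam i == c))%N ->
  (cnt a (a + k) (prl lam c) < cnt a (a + k).+1 (fun i => lam i == c))%N.
Proof.
elim: k a => [|k IH] a h.
  by move: h; rewrite !addn0 /cnt [\sum_(a <= i < a) _]big_geq.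
rewrite addnS -addSn in h *.
rewrite (cnt_recl _ (_ : a < a.+1 + k)%N); last by lia.
rewrite (cnt_recl _ (_ : a < (a.+1 + k).+1)%N) in h *; last by lia.
have IH' := IH a.+1.
case: (boolP (prl lam c a)) => hp.
  have hp' := hp; case/andP: hp' => h1 h2.
  have g : (1 <= cnt a.+1 (a.+1 + k).+1 (fun i => lam i == c))%N.
    by apply: (@cnt_ge1 _ _ _ a.+1) => //; lia.
  by have := IH' g; rewrite h1 /=; lia.
have [g|g] := leqP 1 (cnt a.+1 (a.+1 + k).+1 (fun i => lam i == c)).
  by have := IH' g; case: (lam a == c) => /=; lia.
have z1 : cnt a.+1 (a.+1 + k) (prl lam c) = 0%N.
  apply/eqP; rewrite -leqn0; apply: leq_trans (_ : _ <= cnt a.+1 (a.+1 + k).+1 (fun i => lam i == c))%N _; last by lia.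
  rewrite (cnt_split _ (_ : a.+1 <= a.+1 + k)%N (_ : a.+1 + k <= (a.+1 + k).+1)%N); try lia.
  apply: leq_trans (leq_addr _ _); apply: cnt_mono => i _ /andP[] //.
by rewrite z1 /=.
Qed.

End PairsGen.

Section Upper.
Variables (R : realType) (n : nat) (lam mu : nat -> R).
Hypothesis hn : (2 <= n)%N.
Hypothesis hlam : forall i, (1 <= i)%N -> (i < n)%N -> lam i.+1 <= lam i.
Hypothesis hmu : forall i, (1 <= i)%N -> (i < n.-1)%N -> mu i.+1 <= mu i.
Hypothesis hder : (prodX 1 n.+1 lam)^`() = n%:R *: prodX 1 n mu.

Local Notation q := (prodX 1 n.+1 lam).

Let ilo j : (1 <= j)%N -> (j < n)%N -> lam j.+1 <= mu j.
Proof. move=> h1 h2; exact: (interlace_lo hn hlam hmu hder h1 h2). Qed.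
Let ihi j : (1 <= j)%N -> (j < n)%N -> mu j <= lam j.
Proof. move=> h1 h2; exact: (interlace_hi hn hlam hmu hder h1 h2). Qed.
Let ls i j : (1 <= i)%N -> (i <= j)%N -> (j <= n)%N -> lam j <= lam i.
Proof. exact: (@sorted_range R lam 1 n hlam i j). Qed.
Let ms i j : (1 <= i)%N -> (i <= j)%N -> (j <= n.-1)%N -> mu j <= mu i.
Proof. exact: (@sorted_range R mu 1 n.-1 hmu i j). Qed.

Definition pr (c : R) : pred nat := fun u => (lam u == c) && (lam u.+1 == c).

Lemma pairs_sorted c k : (k < n)%N ->
  (cnt (n - k) n.+1 (fun i => lam i == c) <= (cnt (n - k) n (pr c)).+1)%N.
Proof.
elim: k => [|k IH] hk.
  rewrite subn0; have := cnt_le_len n n.+1 (fun i => lam i == c); rewrite subSnn; lia.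
have IH' := IH (ltnW hk).
set a := (n - k.+1)%N.
have ea : a.+1 = (n - k)%N by rewrite /a; lia.
rewrite (cnt_recl _ (_ : a < n.+1)%N); last by rewrite /a; lia.
rewrite (cnt_recl _ (_ : a < n)%N); last by rewrite /a; lia.
rewrite ea.
case: (boolP (lam a == c)) => hac; last first.
  by rewrite /pr (negPf hac) /=.
case: (boolP (lam a.+1 == c)) => hac1.
  by rewrite /pr hac hac1 /=.
have lt : lam a.+1 < c.
  rewrite lt_neqAle hac1 -(eqP hac) ls //; rewrite /a; lia.
rewrite (@cnt0 _ _ (fun i => lam i == c)); first by rewrite /=; lia.
move=> i hi; rewrite neq_lt; apply/orP; left.
apply: le_lt_trans lt; apply: ls; rewrite /a in hi *; lia.
Qed.

Lemma char_coinc t : (1 <= t)%N -> (t < n)%N -> root q (mu t) -> lam t = lam t.+1.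
Proof.
move=> h1 h2 hr; apply/eqP/negPn/negP => hne.
set c := mu t.
have M := Mu hn hder hr.
have kk : (n.-1 < n)%N by lia.
have P1 := pairs_sorted c kk.
have e1 : (n - n.-1 = 1)%N by lia.
rewrite e1 in P1.
have A : (cnt 1 n (pr c) + cnt 1 n (fun u => u == t) + cnt 1 n xpred0
          <= cnt 1 n (fun u => mu u == c))%N.
  apply: cnt_add3 => u hu /=; rewrite addn0.
  case: (boolP (pr c u)) => hp.
    have [hu1 hu2] : lam u = c /\ lam u.+1 = c by case/andP: hp => /eqP -> /eqP ->.
    have hut : (u == t) = false.
      apply/negP => /eqP e; subst u; by rewrite hu1 hu2 eqxx in hne.
    have -> : mu u == c.
      rewrite eq_le; apply/andP; split.
        rewrite -hu1; apply: ihi; lia.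
      rewrite -hu2; apply: ilo; lia.
    by rewrite hut.
  case: (boolP (u == t)) => // /eqP ->; by rewrite /c eqxx.
have B : (1 <= cnt 1 n (fun u => u == t))%N.
  by apply: (@cnt_ge1 _ _ _ t) => //; lia.
have C0 : cnt 1 n xpred0 = 0%N by apply: cnt0.
have [i hi hic] := root_prodX hr.
have D : (1 <= cnt 1 n.+1 (fun i => lam i == c))%N.
  by apply: (@cnt_ge1 _ _ _ i) => //; rewrite hic.
rewrite -/c in M; move: A B C0 D M P1; clear; lia.
Qed.

Lemma coinc_mu t : (1 <= t)%N -> (t < n)%N -> lam t = lam t.+1 -> mu t = lam t.
Proof.
move=> h1 h2 e; apply/eqP; rewrite eq_le ihi //=.
by rewrite [X in (X <= _)]e ilo.
Qed.

Lemma simple_nroot t : (1 <= t)%N -> (t < n)%N -> lam t != lam t.+1 -> ~~ root q (mu t).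
Proof. by move=> h1 h2 hne; apply/negP => /(char_coinc h1 h2) e; rewrite e eqxx in hne. Qed.

Lemma simple_between t : (1 <= t)%N -> (t < n)%N -> lam t != lam t.+1 ->
  lam t.+1 < mu t /\ mu t < lam t.
Proof.
move=> h1 h2 hne; have nr := simple_nroot h1 h2 hne.
have r1 : (1 <= t.+1 < n.+1)%N by lia.
have r2 : (1 <= t < n.+1)%N by lia.
split; rewrite lt_neqAle ?ilo ?ihi // andbT; apply/negP => /eqP e; move: nr.
  by rewrite -e root_prodX_at.
by rewrite e root_prodX_at.
Qed.

Lemma simple_lt t u : (1 <= t)%N -> (t < n)%N -> lam t != lam t.+1 ->
  (1 <= u)%N -> (u < t)%N -> mu t < mu u /\ mu t < lam u.
Proof.
move=> h1 h2 hne h3 h4; have [b1 b2] := simple_between h1 h2 hne.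
have l1 : lam t <= lam u.+1 by apply: ls; lia.
have l2 : lam t <= lam u by apply: ls; lia.
split; first apply: (lt_le_trans b2 (le_trans l1 (ilo _ _))); try lia.
exact: lt_le_trans b2 l2.
Qed.

Lemma simple_gt t u : (1 <= t)%N -> (t < n)%N -> lam t != lam t.+1 ->
  (t < u)%N -> (u <= n)%N -> lam u < mu t /\ ((u < n)%N -> mu u < mu t).
Proof.
move=> h1 h2 hne h3 h4; have [b1 b2] := simple_between h1 h2 hne.
have l1 : lam u <= lam t.+1 by apply: ls; lia.
split; first exact: le_lt_trans l1 b1.
move=> hu; apply: le_lt_trans b1; apply: le_trans l1; apply: ihi; lia.
Qed.

Lemma logsum_zero t : (1 <= t)%N -> (t < n)%N -> lam t != lam t.+1 ->
  \sum_(1 <= i < n.+1) (mu t - lam i)^-1 = 0.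
Proof.
move=> h1 h2 hne; have nr := simple_nroot h1 h2 hne.
have hq : q.[mu t] != 0 by rewrite -rootE.
have := prodX_logder hq; rewrite hder hornerZ.
have : root (prodX 1 n mu) (mu t) by apply: root_prodX_at; lia.
rewrite rootE => /eqP ->; rewrite mulr0 => /esym /eqP; rewrite mulf_eq0 (negPf hq) /=.
by move/eqP.
Qed.

Section Window.
Variables l r : nat.
Hypotheses (hl : (1 <= l)%N) (hlr : (l <= r)%N) (hrn : (r < n)%N).

Lemma B_nonneg t : (l <= t)%N -> (t <= r)%N -> lam t != lam t.+1 ->
  0 <= (n - r)%:R + (mu t - lam r.+1) * \sum_(l <= i < r.+1) (mu t - lam i)^-1.
Proof.
move=> h1 h2 hne; have t1 : (1 <= t)%N by lia.
have t2 : (t < n)%N by lia.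
have [b1 b2] := simple_between t1 t2 hne.
set a := mu t; set c := lam r.+1.
have ac : c < a.
  apply: (le_lt_trans _ b1); apply: ls; lia.
have Z := logsum_zero t1 t2 hne; rewrite -/a in Z.
rewrite (@big_cat_nat _ _ _ l 1 n.+1) //= in Z; last by lia.
rewrite (@big_cat_nat _ _ _ r.+1 l n.+1) //= in Z; try lia.
set S1 := \sum_(1 <= i < l) _ in Z; set S2 := \sum_(l <= i < r.+1) _ in Z *.
set S3 := \sum_(r.+1 <= i < n.+1) _ in Z.
have eS2 : S2 = - S1 - S3 by move: Z; rewrite addrA; lra.
have hS1 : S1 <= 0.
  rewrite /S1 big_nat; apply: sumr_le0 => i /andP[i1 i2].
  rewrite invr_le0 subr_le0 /a; apply: ltW; apply: (lt_le_trans b2); apply: ls; lia.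
have hS3 : (a - c) * S3 <= (n - r)%:R.
  rewrite /S3 mulr_sumr.
  have -> : (n - r)%:R = \sum_(r.+1 <= i < n.+1) (1 : R).
    by rewrite sumr_const_nat; congr (_%:R); lia.
  apply: ler_sum_nat => j /andP[j1 j2].
  have lc : lam j <= c by apply: ls; lia.
  have p1 : 0 < a - c by rewrite subr_gt0.
  have p2 : 0 < a - lam j by rewrite subr_gt0; exact: le_lt_trans lc ac.
  rewrite ler_pdivrMr // mul1r; lra.
have p1 : 0 <= a - c by rewrite subr_ge0 ltW.
rewrite eS2; have := mulr_ge0_le0 p1 hS1; nra.
Qed.

Lemma term_sign t : (l <= t)%N -> (t <= r)%N -> lam t != lam t.+1 ->
  (prodX l r.+1 lam).[mu t] / \prod_(l <= u < r.+1 | u != t) (mu t - mu u) < 0.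
Proof.
move=> h1 h2 hne; have t1 : (1 <= t)%N by lia.
have t2 : (t < n)%N by lia.
have [b1 b2] := simple_between t1 t2 hne.
set a := mu t.
rewrite prodX_horner (bigD1_seq t) ?mem_index_iota ?iota_uniq //=; last by lia.
rewrite -mulrA -prodf_div pmulr_llt0 ?subr_lt0 //.
rewrite big_seq_cond; apply: prodr_gt0 => u /andP[]; rewrite mem_index_iota => /andP[u1 u2] ut.
have [ult|ugt|eut] := ltngtP u t.
- have u0 : (1 <= u)%N by lia.
  have [c1 c2] := simple_lt t1 t2 hne u0 ult; rewrite -/a in c1 c2.
  by rewrite -divrNN divr_gt0 // oppr_gt0 subr_lt0.
- have un : (u <= n)%N by lia.
  have un' : (u < n)%N by lia.
  have [c1 c2] := simple_gt t1 t2 hne ugt un; have c3 := c2 un'; rewrite -/a in c1 c3.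
  by apply: divr_gt0; rewrite subr_gt0.
- by rewrite eut eqxx in ut.
Qed.

Lemma wA t : (l <= t)%N -> (1 <= t)%N. Proof. lia. Qed.
Lemma wB t : (t <= r)%N -> (t < n)%N. Proof. lia. Qed.
Lemma wC t : (l <= t)%N -> (t <= r)%N -> (l <= t < r.+1)%N. Proof. lia. Qed.

Lemma simple_inj t u : (l <= t)%N -> (t <= r)%N -> lam t != lam t.+1 ->
  (l <= u)%N -> (u <= r)%N -> mu t = mu u -> t = u.
Proof.
move=> t1 t2 tC u1 u2 e.
have ta : (1 <= t)%N by lia.
have tb : (t < n)%N by lia.
have [ut|tu|//] := ltngtP u t.
- have u0 : (1 <= u)%N by lia.
  by have [c1 _] := simple_lt ta tb tC u0 ut; rewrite e ltxx in c1.
- have un : (u <= n)%N by lia.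
  have un' : (u < n)%N by lia.
  by have [_ c2] := simple_gt ta tb tC tu un; have := c2 un'; rewrite e ltxx.
Qed.

Lemma upper_window :
  \sum_(l <= j < r.+1) mu j <= \sum_(l <= j < r.+1) lam j
      - ((n - l).+1)%:R^-1 * \sum_(l <= j < r.+1) (lam j - lam r.+1).
Proof.
have [m' em] : exists m', (r.+1 - l = m'.+1)%N by exists (r - l)%N; lia.
pose c := lam r.+1.
pose Qt := prodX l r.+1 lam.
pose K := prodX l r.+1 mu.
pose E := (n - r)%:R *: Qt + ('X - c%:P) * Qt^`().
pose NN : R := ((n - l).+1)%:R.
pose D := E - NN *: K.
pose sig := \sum_(l <= j < r.+1) lam j.
pose smu := \sum_(l <= j < r.+1) mu j.
have NNe : NN = (n - r)%:R + m'%:R + 1.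
  by rewrite /NN -natr1 -natrD; congr (_%:R + 1); lia.
have NNpos : 0 < NN by rewrite /NN ltr0n.
have cQ1 : Qt`_m'.+1 = 1 by rewrite -em; exact: coef_prodX_top.
have cQ0 : Qt`_m' = - sig by rewrite /Qt -[m']/(m'.+1.-1) -em coef_prodX_sub.
have cQ2 : Qt`_m'.+2 = 0 by rewrite nth_default // prodX_size em.
have cK1 : K`_m'.+1 = 1 by rewrite -em; exact: coef_prodX_top.
have cK0 : K`_m' = - smu by rewrite /K -[m']/(m'.+1.-1) -em coef_prodX_sub.
have cDm : D`_m'.+1 = 0.
  rewrite /D /E coefB coefD !coefZ coefXsubCMS !coef_deriv cQ1 cQ2 cK1 NNe.
  rewrite mul0rn mulr0 subr0 mulr1; ring.
have cD0 : D`_m' = - (n - r)%:R * sig - m'%:R * sig - m'.+1%:R * c + NN * smu.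
  rewrite /D /E coefB coefD !coefZ cQ0 cK0.
  case: m' em cQ1 cQ0 cQ2 cK1 cK0 NNe {cDm} => [|m''] em cQ1 cQ0 cQ2 cK1 cK0 NNe.
    rewrite coefXsubCM /= coef_deriv cQ1 -mulNrn; ring.
  rewrite coefXsubCMS !coef_deriv cQ1 cQ0 -mulr_natr; ring.
have key : D`_m' <= 0.
  pose C : pred nat := fun u => lam u == lam u.+1.
  pose Z := \prod_(l <= u < r.+1 | C u) ('X - (lam u)%:P).
  pose s := [seq u <- index_iota l r.+1 | ~~ C u].
  have Zm : Z \is monic by apply: monic_prodXs.
  have sZ : size Z = (count C (index_iota l r.+1)).+1 by apply: size_prodXs.
  have cnts : (count C (index_iota l r.+1) + size s = m'.+1)%N.
    by rewrite size_filter count_predC size_iota em.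
  have sQt : size Qt = m'.+2 by rewrite prodX_size em.
  have sK : size K = m'.+2 by rewrite prodX_size em.
  have sD : (size D <= m'.+1)%N.
    have sE : (size E <= m'.+2)%N.
      rewrite /E; apply: (leq_trans (size_add _ _)); rewrite geq_max; apply/andP; split.
        by apply: (leq_trans (size_scale_leq _ _)); rewrite sQt.
      apply: (leq_trans (size_mul_leq _ _)); rewrite size_XsubC size_deriv sQt //.
    have sD' : (size D <= m'.+2)%N.
      rewrite /D; apply: (leq_trans (size_add _ _)); rewrite geq_max sE size_opp /=.
      by apply: (leq_trans (size_scale_leq _ _)); rewrite sK.
    apply/leq_sizeP => j hj; have [->|ne] := eqVneq j m'.+1; first exact: cDm.
    by move/leq_sizeP: sD'; apply; lia.
  have QtN : Qt != 0 by apply: prodX_neq0.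
  have ZQt : Z %| Qt.
    apply: dvd_mu_range => // c0; rewrite mu_prodX.
    by apply: cnt_mono => u _ /andP[].
  pose Q1 := prodX l r.+2 lam.
  have eQ1 : Q1 = Qt * ('X - c%:P) by rewrite /Q1 /prodX big_nat_recr //=; lia.
  have sQ1 : size Q1 = m'.+3 by rewrite prodX_size; congr (_.+1); lia.
  have Q1dN : Q1^`() != 0 by rewrite -size_poly_eq0 size_deriv sQ1.
  have ZQ1 : Z %| Q1^`().
    apply: dvd_mu_range => // c0.
    have [rt|nrt] := boolP (root Q1 c0).
      rewrite mu_deriv // mu_prodX.
      have e1 : cnt l r.+1 (fun u => C u && (lam u == c0)) = cnt l r.+1 (prl lam c0).
        apply: cnt_eq => u _; rewrite /C /prl.
        by apply/idP/idP => /andP[/eqP h1 /eqP h2]; apply/andP; split; apply/eqP; congruence.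
      rewrite e1.
      have [i hi hic] := root_prodX rt.
      have g : (1 <= cnt l (l + m'.+1).+1 (fun i => lam i == c0))%N.
        apply: (@cnt_ge1 _ _ _ i); first lia.
        by rewrite hic.
      have := pairs_gen g; have -> : (l + m'.+1 = r.+1)%N by lia.
      rewrite /cnt; lia.
    rewrite (@cnt0 _ _ (fun u => C u && (lam u == c0))) // => u hu.
    apply/negP => /andP[_ /eqP e]; move: nrt; rewrite -e root_prodX_at //; lia.
  have eE : E = ((n - r).-1%:R)%:P * Qt + Q1^`().
    rewrite /E eQ1 derivM derivXsubC mulr1 mul_polyC.
    have -> : ((n - r)%:R : R) = (n - r).-1%:R + 1 by rewrite natr1; congr (_%:R); lia.
    rewrite scalerDl scale1r; ring.
  have ZE : Z %| E by rewrite eE dvdp_add // dvdp_mull.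
  have ZK : Z %| K.
    have eK : K = Z * \prod_(l <= u < r.+1 | ~~ C u) ('X - (mu u)%:P).
      rewrite /K /prodX (bigID C) /=; congr (_ * _).
      rewrite /Z big_nat_cond [in RHS]big_nat_cond; apply: eq_bigr => u /andP[/andP[u1 u2] Cu].
      by rewrite coinc_mu //; [lia | lia | exact/eqP].
    by rewrite eK dvdp_mulIl.
  have ZD : Z %| D by rewrite /D dvdp_sub // -mul_polyC dvdp_mull.
  have [D1 eD] : exists D1, D = D1 * Z by exists (D %/ Z); rewrite divpK.
  have [D10|D1N] := eqVneq D1 0.
    by rewrite eD D10 mul0r coef0.
  have ZN : Z != 0 by apply: monic_neq0.
  have sD1 : (size D1 <= size s)%N.
    move: sD; rewrite eD size_Mmonic // sZ.
    move: (size D1) (size s) (count C (index_iota l r.+1)) cnts => x y z; lia.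
  have p0 : (0 < size s)%N.
    move: sD1; case: (size s) => // h; move: D1N.
    by rewrite -size_poly_eq0; move: h; rewrite leqn0 => ->.
  have ecoef : D`_m' = D1`_(size s).-1.
    rewrite eD; have := coef_mul_monic Zm sD1 p0; rewrite sZ /=.
    have -> : ((size s).-1 + count C (index_iota l r.+1))%N = m'.
      by move: (size s) (count C (index_iota l r.+1)) cnts p0 => x y; lia.
    by [].
  have us : uniq s by rewrite filter_uniq // iota_uniq.
  have sin t : t \in s -> [/\ (l <= t)%N, (t <= r)%N & lam t != lam t.+1].
    by rewrite mem_filter mem_index_iota => /andP[Ct /andP[t1 t2]]; split => //; lia.
  have inj : {in s &, injective mu}.
    move=> t u /sin[t1 t2 tC] /sin[u1 u2 uC] e; exact: simple_inj t1 t2 tC u1 u2 e.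
  rewrite ecoef (lagrange_coef us inj sD1) big_seq; apply: sumr_le0 => t ts.
  have [t1 t2 tC] := sin t ts.
  have ta := wA t1.
  have tb := wB t2.
  have tr := wC t1 t2.
  set a := mu t.
  have nr := simple_nroot ta tb tC; rewrite -/a in nr.
  have Qa : Qt.[a] != 0.
    apply: contra nr; rewrite -rootE => /root_prodX [i hi <-].
    by apply: root_prodX_at; move: hi hl hrn; clear; lia.
  have Ka : K.[a] = 0 by apply/eqP; rewrite -rootE; apply: root_prodX_at.
  have Ea : E.[a] = Qt.[a] * ((n - r)%:R + (a - c) * \sum_(l <= i < r.+1) (a - lam i)^-1).
    rewrite /E hornerD hornerZ hornerM hornerXsubC prodX_logder //; ring.
  have Za : Z.[a] * \prod_(u <- s | u != t) (a - mu u) = \prod_(l <= u < r.+1 | u != t) (a - mu u).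
    rewrite /Z horner_prodXs big_filter_cond [in RHS](bigID C) /=; congr (_ * _).
      rewrite big_nat_cond [in RHS]big_nat_cond; apply: eq_big.
        move=> u; case: (eqVneq u t) => [->|ne] /=; last by [].
        by rewrite /C (negPf tC) !andbF.
      move=> u /andP[/andP[u1 u2] Cu]; rewrite coinc_mu //; last exact/eqP.
        by move: u1 hl; clear; lia.
      by move: u2 hrn; clear; lia.
    by apply: eq_bigl => u; rewrite andbC.
  have ZaN : Z.[a] != 0.
    have : \prod_(l <= u < r.+1 | u != t) (a - mu u) != 0.
      have := term_sign t1 t2 tC; rewrite -/a; apply: contraTneq => ->.
      by rewrite invr0 mulr0 ltxx.
    by rewrite -Za mulf_eq0 negb_or => /andP[].
  have D1a : D1.[a] = E.[a] / Z.[a].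
    apply: (mulIf ZaN); rewrite -hornerM -eD mulfVK // /D hornerD hornerN hornerZ Ka mulr0 subr0 //.
  rewrite D1a Ea -mulrA -invfM Za mulrAC.
  have Bn := B_nonneg t1 t2 tC; rewrite -/a -/c in Bn.
  have T := term_sign t1 t2 tC; rewrite -/a in T.
  by apply: mulr_le0_ge0 => //; apply: ltW.
have sB : \sum_(l <= j < r.+1) (lam j - lam r.+1) = sig - m'.+1%:R * c.
  by rewrite sumrB sumr_const_nat em mulr_natl.
rewrite sB -/sig -/smu -(ler_pM2l NNpos) mulrBr mulrA mulfV ?gt_eqF // mul1r.
rewrite cD0 in key; rewrite -subr_ge0; set z := _ - _.
have -> : z = - (- (n - r)%:R * sig - m'%:R * sig - m'.+1%:R * c + NN * smu).
  by rewrite /z NNe -natr1; ring.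
by rewrite oppr_ge0.
Qed.

End Window.

End Upper.


Lemma sum_refl (R : realType) (G : nat -> R) (N a b : nat) : (a <= b)%N -> (b <= N)%N ->
  \sum_(N - b <= j < N - a) G (N - j)%N = \sum_(a.+1 <= j < b.+1) G j.
Proof.
move=> hab; elim: b hab => [|b IH] hab hbN.
  have -> : a = 0%N by lia.
  by rewrite !big_geq.
have [e|ne] := eqVneq a b.+1.
  by subst a; rewrite !big_geq.
have hab' : (a <= b)%N by lia.
rewrite big_nat_recr /=; last by lia.
rewrite -IH //; last by lia.
have -> : (N - b = (N - b.+1).+1)%N by lia.
rewrite big_ltn; last by lia.
by rewrite addrC; congr (G _ + _); lia.
Qed.

Unset Implicit Arguments.

Theorem proposition2p4 (R : realType) (n : nat) (lam mu : nat -> R) :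
  (2 <= n)%N ->
  (forall i : nat, (1 <= i)%N -> (i < n)%N -> lam i.+1 <= lam i) ->
  (forall i : nat, (1 <= i)%N -> (i < n.-1)%N -> mu i.+1 <= mu i) ->
  (rootpoly lam n)^`() = n%:R *: rootpoly mu n.-1 ->
  forall l r : nat, (1 <= l)%N -> (l <= r)%N -> (r <= n.-1)%N ->
    \sum_(l <= j < r.+1) lam j.+1
      + (r.+1)%:R^-1 * \sum_(l <= j < r.+1) (lam l - lam j.+1)
    <= \sum_(l <= j < r.+1) mu j
  /\ \sum_(l <= j < r.+1) mu j
    <= \sum_(l <= j < r.+1) lam j
      - ((n - l).+1)%:R^-1 * \sum_(l <= j < r.+1) (lam j - lam r.+1).
Proof.
move=> hn hlam hmu hder0 l r hl hlr hr.
have hder : (prodX 1 n.+1 lam)^`() = n%:R *: prodX 1 n mu.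
  have e : n.-1.+1 = n by lia.
  by move: hder0; rewrite /rootpoly e.
have hrn : (r < n)%N by lia.
have U2 := upper_window hn hlam hmu hder hl hlr hrn.
split; last exact: U2.
have h1 : (0 < n - r)%N by lia.
have h2 : (n - r <= n - l)%N by lia.
have h3 : (n - l < n)%N by lia.
have U := upper_window hn (hlamR hn hlam) (hmuR hn hmu) (hderR hn hder) h1 h2 h3.
have conv1 (F : nat -> R) : \sum_(n - r <= j < (n - l).+1) F (n - j)%N = \sum_(l <= j < r.+1) F j.
  have -> : (n - l).+1 = (n - l.-1)%N by lia.
  rewrite sum_refl; [|lia|lia].
  by rewrite prednK.
have conv2 (F : nat -> R) : \sum_(n - r <= j < (n - l).+1) F (n.+1 - j)%N = \sum_(l <= j < r.+1) F j.+1.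
  have -> : (n - l).+1 = (n.+1 - l)%N by lia.
  have -> : (n - r)%N = (n.+1 - r.+1)%N by lia.
  rewrite sum_refl; [|lia|lia].
  by rewrite big_add1.
have e3 : (n - (n - r)).+1 = r.+1 by lia.
have e4 : lamR n lam (n - l).+1 = - lam l.
  by rewrite /lamR; have -> : (n.+1 - (n - l).+1 = l)%N by lia.
rewrite e3 e4 in U.
rewrite /muR (conv1 (fun k => - mu k)) in U.
rewrite /lamR (conv2 (fun k => - lam k)) in U.
rewrite (conv2 (fun k => - lam k - - lam l)) in U.
rewrite !sumrN in U.
have -> : \sum_(l <= j < r.+1) (lam l - lam j.+1) = \sum_(l <= j < r.+1) (- lam j.+1 - - lam l).
  by apply: eq_bigr => j _; ring.
set k := (r.+1)%:R^-1 in U *.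
set S := \sum_(l <= j < r.+1) (- lam j.+1 - - lam l) in U *.
lra.
Qed.
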